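(* Let $T\in\mathcal{L}(\mathcal{H})$ have closed range and let $n\ge1$. Suppose that either (i) $T^\dagger T$ commutes with $T^n+T^\dagger$, or (ii) $T^\dagger T$ commutes with $T^n+T^*$. Then $T$ is $n$-hypo-EP.
   Context: $\mathcal{H}$ is a Hilbert space, $\mathcal{L}(\mathcal{H})$ the bounded operators on it; $R(\cdot)$ denotes range. For $T$ with closed range, $T^\dagger$ is its Moore–Penrose inverse (unique solution of $TT^\dagger T=T$, $T^\dagger TT^\dagger=T^\dagger$, $(T^\dagger T)^*=T^\dagger T$, $(TT^\dagger)^*=TT^\dagger$). For $n\ge1$, $T$ is $n$-hypo-EP if $T$ has closed range and $R(T^n)\subset R(T^* )$. *)

(* Defs.v *)
From HB Require Import structures.
From mathcomp Require Import all_boot all_order all_algebra.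
From mathcomp Require Import reals.
From mathcomp Require Import complex.
Set Implicit Arguments. Unset Strict Implicit. Unset Printing Implicit Defensive.
Import Order.TTheory GRing.Theory Num.Theory.
Local Open Scope ring_scope.

Section Hilbert.
Variables (R : realType).
Local Notation C := (R[i]).
Variables (H : lmodType C) (ip : H -> H -> C).

Definition hnorm (x : H) : C := sqrtC (ip x x).

Definition hconverges (u : nat -> H) (l : H) : Prop :=
  forall eps : C, 0 < eps -> exists N : nat, forall k : nat, (N <= k)%N ->
    hnorm (u k - l) < eps.

Definition hcauchy (u : nat -> H) : Prop :=
  forall eps : C, 0 < eps -> exists N : nat, forall k m : nat, (N <= k)%N ->
    (N <= m)%N -> hnorm (u k - u m) < eps.

Record is_hilbert : Prop := IsHilbert {
  ip_linearl : forall (a : C) (x y z : H), ip (a *: x + y) z = a * ip x z + ip y z;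
  ip_conj : forall x y : H, ip y x = (ip x y)^*;
  ip_ge0 : forall x : H, 0 <= ip x x;
  ip_eq0 : forall x : H, ip x x = 0 -> x = 0;
  h_complete : forall u : nat -> H, hcauchy u -> exists l, hconverges u l
}.

Definition bounded_op (T : H -> H) : Prop :=
  (forall (a : C) (x y : H), T (a *: x + y) = a *: T x + T y) /\
  exists M : C, 0 <= M /\ forall x : H, hnorm (T x) <= M * hnorm x.

Definition range (T : H -> H) (y : H) : Prop := exists x, T x = y.

Definition closed_set (S : H -> Prop) : Prop :=
  forall (u : nat -> H) (l : H), (forall k, S (u k)) -> hconverges u l -> S l.

Definition closed_range (T : H -> H) : Prop := closed_set (range T).

Definition is_adjoint (T Ts : H -> H) : Prop :=
  bounded_op Ts /\ forall x y : H, ip (T x) y = ip x (Ts y).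

Definition is_MP_inverse (T Td : H -> H) : Prop :=
  [/\ bounded_op Td,
      forall x, T (Td (T x)) = T x,
      forall x, Td (T (Td x)) = Td x,
      is_adjoint (Td \o T) (Td \o T) &
      is_adjoint (T \o Td) (T \o Td)].

Definition commute_op (P Q : H -> H) : Prop := forall x, P (Q x) = Q (P x).

Definition op_add (P Q : H -> H) : H -> H := fun x => P x + Q x.

Definition op_pow (T : H -> H) (n : nat) : H -> H := iter n T.

Definition n_hypo_EP (n : nat) (T Ts : H -> H) : Prop :=
  closed_range T /\ (forall y, range (op_pow T n) y -> range Ts y).

End Hilbert.

(* Main.v *)
Require Import Defs.
From HB Require Import structures.
From mathcomp Require Import all_boot all_order all_algebra.
From mathcomp Require Import reals.
From mathcomp Require Import complex.
From mathcomp Require Import ring lra.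
Set Implicit Arguments. Unset Strict Implicit. Unset Printing Implicit Defensive.
Import Order.TTheory GRing.Theory Num.Theory.
Local Open Scope complex_scope.
Local Open Scope ring_scope.

Section Basics.
Variable R : realType.
Variable H : lmodType R[i].
Variable ip : H -> H -> R[i].
Hypothesis hH : is_hilbert ip.

Lemma reC (t : R) (z : R[i]) : complex.Re (t%:C * z) = t * complex.Re z.
Proof. case: z => a b. by simpc. Qed.
Lemma reJ (z : R[i]) : complex.Re (z^*) = complex.Re z.
Proof. apply: complexI. by rewrite !complexRe Re_conj. Qed.
Lemma ge0C (z : R[i]) : 0 <= z -> z = (complex.Re z)%:C.
Proof. case: z => a b. rewrite lecE /= => /andP[/eqP h _]. by rewrite h. Qed.
Lemma ReD (a b : R[i]) : complex.Re (a + b) = complex.Re a + complex.Re b.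
Proof. by case: a; case: b. Qed.
Lemma ReN (a : R[i]) : complex.Re (- a) = - complex.Re a.
Proof. by case: a. Qed.
Lemma conjR (t : R) : (t%:C)^* = t%:C.
Proof. apply: conj_Creal. by rewrite complex_real. Qed.

Lemma ipDl x y z : ip (x + y) z = ip x z + ip y z.
Proof. have := ip_linearl hH 1 x y z. by rewrite scale1r mul1r. Qed.
Lemma ip0l z : ip 0 z = 0.
Proof.
have := ipDl 0 0 z. rewrite addr0 => /(congr1 (fun v => v - ip 0 z)).
by rewrite subrr addrK.
Qed.
Lemma ipZl a x z : ip (a *: x) z = a * ip x z.
Proof. have := ip_linearl hH a x 0 z. by rewrite addr0 ip0l addr0. Qed.
Lemma ipNl x z : ip (- x) z = - ip x z.
Proof. by rewrite -scaleN1r ipZl mulN1r. Qed.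
Lemma ipDr x y z : ip x (y + z) = ip x y + ip x z.
Proof. by rewrite (ip_conj hH (y + z) x) (ip_conj hH y x) (ip_conj hH z x) ipDl rmorphD. Qed.
Lemma ipZr a x y : ip x (a *: y) = a^* * ip x y.
Proof. by rewrite (ip_conj hH (a *: y) x) (ip_conj hH y x) ipZl rmorphM. Qed.
Lemma ipNr x y : ip x (- y) = - ip x y.
Proof. by rewrite (ip_conj hH (- y) x) (ip_conj hH y x) ipNl rmorphN. Qed.
Lemma ip0r x : ip x 0 = 0.
Proof. by rewrite (ip_conj hH 0 x) ip0l rmorph0. Qed.

Definition nr x := complex.Re (ip x x).
Definition re2 x y := complex.Re (ip x y).

Lemma ipxx x : ip x x = (nr x)%:C.
Proof. exact: ge0C (ip_ge0 hH x). Qed.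
Lemma nr_ge0 x : 0 <= nr x.
Proof. by rewrite -ler0c -ipxx; exact: ip_ge0. Qed.
Lemma nr_eq0 x : nr x = 0 -> x = 0.
Proof. move=> h; apply: (ip_eq0 hH). by rewrite ipxx h. Qed.
Lemma re2C x y : re2 y x = re2 x y.
Proof. by rewrite /re2 (ip_conj hH x y) reJ. Qed.
Lemma nrD x y : nr (x + y) = nr x + nr y + 2 * re2 x y.
Proof.
rewrite /nr ipDl !ipDr !ReD. rewrite -/(re2 y x) re2C -/(re2 x y). 
rewrite -/(nr x) -/(nr y). lra.
Qed.
Lemma re2Nr x y : re2 x (- y) = - re2 x y.
Proof. by rewrite /re2 ipNr ReN. Qed.
Lemma re2Zr x y t : re2 x (t%:C *: y) = t * re2 x y.
Proof. by rewrite /re2 ipZr conjR reC. Qed.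
Lemma re2Zl x y t : re2 (t%:C *: x) y = t * re2 x y.
Proof. by rewrite /re2 ipZl reC. Qed.
Lemma nrN x : nr (- x) = nr x.
Proof. by rewrite /nr ipNl ipNr opprK. Qed.
Lemma nrZ x t : nr (t%:C *: x) = t ^+ 2 * nr x.
Proof. by rewrite /nr ipZl ipZr conjR reC reC mulrA expr2. Qed.
Lemma nrBZ x y t : nr (x - t%:C *: y) = nr x - 2 * t * re2 x y + t ^+ 2 * nr y.
Proof. rewrite nrD nrN nrZ re2Nr re2Zr. lra. Qed.
Lemma re2_0r x : re2 x 0 = 0.
Proof. by rewrite /re2 ip0r. Qed.

Lemma ipBr x y z : ip x (y - z) = ip x y - ip x z.
Proof. by rewrite ipDr ipNr. Qed.

Definition nrm x := Num.sqrt (nr x).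
Lemma nrm_ge0 x : 0 <= nrm x. Proof. exact: sqrtr_ge0. Qed.
Lemma nrm2 x : nrm x ^+ 2 = nr x. Proof. exact: sqr_sqrtr (nr_ge0 x). Qed.
Lemma hnormE x : hnorm ip x = (nrm x)%:C.
Proof.
rewrite /hnorm ipxx -(nrm2 x) rmorphXn /= sqrCK //.
by rewrite ler0c nrm_ge0.
Qed.
Lemma nrm_eq0 x : nrm x = 0 -> x = 0.
Proof. move=> h; apply: nr_eq0. by rewrite -nrm2 h expr0n. Qed.
Lemma nrm0 : nrm 0 = 0.
Proof. by rewrite /nrm /nr ip0l sqrtr0. Qed.
Lemma nrmN x : nrm (- x) = nrm x. Proof. by rewrite /nrm nrN. Qed.
Lemma nrmZ x t : nrm (t%:C *: x) = `|t| * nrm x.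
Proof. by rewrite /nrm nrZ sqrtrM ?sqrtr_sqr // sqr_ge0. Qed.

Lemma sq_le (p c : R) : 0 <= c -> p ^+ 2 <= c ^+ 2 -> p <= c.
Proof.
move=> hc h; case: (lerP p 0) => hp; first exact: le_trans hp hc.
by rewrite -ler_sqr ?nnegrE // ltW.
Qed.

Lemma CS x y : re2 x y <= nrm x * nrm y.
Proof.
have [hy|hy] := eqVneq (nr y) 0.
  rewrite (nr_eq0 hy) re2_0r. by rewrite mulr_ge0 // nrm_ge0.
have py : 0 < nr y by rewrite lt0r hy nr_ge0.
set p := re2 x y. set t := p / nr y.
have h := nr_ge0 (x - t%:C *: y). rewrite nrBZ -/p in h.
have ht : t * nr y = p by rewrite /t mulfVK // gt_eqF.
have h2 : p ^+ 2 <= nr x * nr y.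
  have := mulr_ge0 h (ltW py). rewrite -ht => h3. rewrite -subr_ge0.
  have <- : (nr x - 2 * t * (t * nr y) + t ^+ 2 * nr y) * nr y = nr x * nr y - (t * nr y) ^+ 2 by ring.
  exact: h3.
have a0 := nrm_ge0 x. have b0 := nrm_ge0 y.
apply: sq_le; first exact: mulr_ge0.
by rewrite exprMn nrm2 nrm2.
Qed.

Lemma nrm_tri x y : nrm (x + y) <= nrm x + nrm y.
Proof.
have h := CS x y. have := nrD x y. rewrite -!nrm2 => e.
have a0 := nrm_ge0 x. have b0 := nrm_ge0 y.
apply: sq_le; first exact: addr_ge0.
rewrite e. have -> : (nrm x + nrm y) ^+ 2 = nrm x ^+ 2 + nrm y ^+ 2 + 2 * (nrm x * nrm y) by ring.
lra.
Qed.

Section Ops.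
Variable F : H -> H.
Hypothesis hF : bounded_op ip F.

Lemma opD x y : F (x + y) = F x + F y.
Proof. case: hF => hl _. have := hl 1 x y. by rewrite !scale1r. Qed.
Lemma op0 : F 0 = 0.
Proof.
have := opD 0 0. rewrite addr0 => /(congr1 (fun v => v - F 0)).
by rewrite subrr addrK.
Qed.
Lemma opZ a x : F (a *: x) = a *: F x.
Proof. case: hF => hl _. have := hl a x 0. by rewrite !addr0 op0 addr0. Qed.
Lemma opN x : F (- x) = - F x.
Proof. by rewrite -scaleN1r opZ scaleN1r. Qed.
Lemma opB x y : F (x - y) = F x - F y.
Proof. by rewrite opD opN. Qed.
Lemma op_bound : exists M : R, 1 <= M /\ forall x, nrm (F x) <= M * nrm x.
Proof.
case: hF => _ [Mc [hM hb]]. have e := ge0C hM.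
have hM' : 0 <= complex.Re Mc by move: hM; rewrite e ler0c.
exists (complex.Re Mc + 1); split; first lra.
move=> x; have := hb x; rewrite !hnormE e -rmorphM lecR => h.
have := nrm_ge0 x. nra.
Qed.
End Ops.

Lemma conv_R u l : hconverges ip u l ->
  forall e : R, 0 < e -> exists N, forall k, (N <= k)%N -> nrm (u k - l) < e.
Proof.
move=> hc e he. have [|N hN] := hc e%:C; first by rewrite ltcE /= eqxx.
exists N => k hk. have := hN k hk. by rewrite hnormE ltcR.
Qed.

Lemma cauchy_C u :
  (forall e : R, 0 < e -> exists N, forall k m, (N <= k)%N -> (N <= m)%N ->
     nrm (u k - u m) < e) -> hcauchy ip u.
Proof.
move=> hc eps he. have e := ge0C (ltW he).
have he' : 0 < complex.Re eps by move: he; rewrite e ltcR.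
have [N hN] := hc _ he'. exists N => k m hk hm.
rewrite hnormE e ltcR. exact: hN.
Qed.

End Basics.

Lemma bern (R : realType) (h : R) (k : nat) : 0 <= h -> 1 + k%:R * h <= (1 + h) ^+ k.
Proof.
move=> h0; elim: k => [|k IH]; first by rewrite mul0r addr0 expr0.
rewrite exprS -natr1.
have hk : 0 <= k%:R * h by rewrite mulr_ge0.
have : (1 + k%:R * h) * (1 + h) <= (1 + h) * (1 + h) ^+ k.
  by rewrite mulrC ler_wpM2l // ?addr_ge0.
nra.
Qed.

Lemma geo (R : realType) (s W c : R) : 0 <= s -> s < 1 -> 0 <= W -> 0 < c ->
  exists N, W * s ^+ N < c.
Proof.
move=> s0 s1 W0 c0.
have [->|sn0] := eqVneq s 0.
  by exists 1%N; rewrite expr1 mulr0.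
have sp : 0 < s by rewrite lt0r sn0.
set h := s^-1 - 1.
have hp : 0 < h.
  rewrite /h subr_gt0 invf_gt1 //.
have e1 : s * (1 + h) = 1 by rewrite /h addrC subrK mulfV.
set x := W / (c * h).
have x0 : 0 <= x by rewrite /x divr_ge0 // mulr_ge0 // ltW.
have /andP[_ hk] := truncn_itv x0.
set k := (Num.truncn x).+1 in hk.
exists k.
have hb := bern k (ltW hp).
have e2 : s ^+ k * (1 + h) ^+ k = 1 by rewrite -exprMn e1 expr1n.
have e3 : x * (c * h) = W by rewrite /x mulfVK // gt_eqF // mulr_gt0.
have hk2 : x * (c * h) < k%:R * (c * h) by rewrite ltr_pM2r // mulr_gt0.
rewrite e3 in hk2.
rewrite ltNge; apply/negP => hc.
have sk0 : 0 <= s ^+ k by rewrite exprn_ge0.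
have : c * (1 + h) ^+ k <= W * s ^+ k * (1 + h) ^+ k.
  by rewrite ler_wpM2r // ?exprn_ge0 // addr_ge0 // ltW.
rewrite -mulrA e2 mulr1 => h4.
have : c * (1 + k%:R * h) <= c * (1 + h) ^+ k by rewrite ler_wpM2l // ltW.
have hk0 : 0 <= k%:R * h by rewrite mulr_ge0 // ltW.
nra.
Qed.

Section Key.
Variable R : realType.
Variable H : lmodType R[i].
Variable ip : H -> H -> R[i].
Hypothesis hH : is_hilbert ip.
Variables T Ts Td : H -> H.
Hypothesis hT : bounded_op ip T.
Hypothesis hTs : is_adjoint ip T Ts.
Hypothesis hTd : is_MP_inverse ip T Td.

Lemma PTs v : Td (T (Ts v)) = Ts v.
Proof.
case: hTs => hTsb hadj. case: hTd => hTdb hTTdT _ [_ hPsa] _.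
apply/eqP; rewrite -subr_eq0; apply/eqP.
apply: (ip_eq0 hH).
set a := Td (T (Ts v)) - Ts v.
rewrite {1}/a (ipBr hH).
have := hPsa a (Ts v). rewrite /= => <-.
by rewrite -hadj hTTdT hadj subrr.
Qed.

Lemma key w : exists z, Ts z = Td (T w).
Proof.
have hTsb : bounded_op ip Ts by case: hTs.
have hadj : forall x y, ip (T x) y = ip x (Ts y) by case: hTs.
case: hTd => hTdb hTTdT _ _ _.
have [Mt [Mt1 hMt]] := op_bound hH hT.
have [Ms [Ms1 hMs]] := op_bound hH hTsb.
have [Md [Md1 hMd]] := op_bound hH hTdb.
set w0 := Td (T w).
set L := Ms * Mt.
have L1 : 1 <= L by rewrite /L; nra.
have hA : forall x, nrm ip (Ts (T x)) <= L * nrm ip x.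
  move=> x; apply: le_trans (hMs _) _. rewrite /L -mulrA ler_wpM2l //; last lra.
set D := Md ^+ 2. set E := L ^+ 2.
have D1 : 1 <= D by rewrite /D; nra.
have E1 : 1 <= E by rewrite /E; nra.
set t := (D * E)^-1.
have DE : 0 < D * E by apply: mulr_gt0; lra.
have tDE : t * D * E = 1 by rewrite /t -mulrA mulVf // gt_eqF.
have t0 : 0 < t by rewrite /t invr_gt0.
set q := 1 - t ^+ 2 * E.
have tE0 : 0 < t * E by apply: mulr_gt0 => //; lra.
have tE1 : t * E <= 1.
  have -> : 1 = t * E * D by rewrite -tDE; ring.
  by rewrite ler_peMr // ltW.
have t1 : t <= t * E by rewrite ler_peMr // ltW.
have q0 : 0 <= q.
  rewrite /q subr_ge0 (_ : t ^+ 2 * E = t * (t * E)); last by ring.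
  rewrite -[1]mul1r; apply: ler_pM => //; [exact: ltW|exact: ltW|lra].
have q1 : q < 1.
  rewrite /q ltrBlDr ltrDl (_ : t ^+ 2 * E = t * (t * E)); last by ring.
  exact: mulr_gt0.
set K := fun x => x - t%:C *: Ts (T x).
have PK : forall x, Td (T x) = x -> Td (T (K x)) = K x.
  move=> x hx; rewrite /K (opB hT) (opB hTdb) (opZ hT) (opZ hTdb).
  by rewrite hx PTs.
have nrK : forall x, Td (T x) = x -> nr ip (K x) <= q * nr ip x.
  move=> x hx. rewrite /K (nrBZ hH).
  have e1 : re2 ip x (Ts (T x)) = nr ip (T x) by rewrite /re2 /nr -hadj.
  rewrite e1.
  have h1 : nr ip (Ts (T x)) <= E * nr ip x.
    have hh := hA x. have g1 := nrm_ge0 ip x. have g2 := nrm_ge0 ip (Ts (T x)).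
    rewrite -!(nrm2 hH) /E; nra.
  have h2 : nr ip x <= D * nr ip (T x).
    have hh := hMd (T x). rewrite hx in hh.
    have g1 := nrm_ge0 ip x. have g2 := nrm_ge0 ip (T x).
    rewrite -!(nrm2 hH) /D; nra.
  have h3 : t * E * nr ip x <= t * E * (D * nr ip (T x)).
    by rewrite ler_wpM2l // mulr_ge0 //; lra.
  have h4 : t * E * (D * nr ip (T x)) = nr ip (T x).
    by rewrite -[RHS]mul1r -tDE; ring.
  have h5 : t ^+ 2 * nr ip (Ts (T x)) <= t ^+ 2 * (E * nr ip x).
    by rewrite ler_wpM2l // exprn_ge0 // ltW.
  have h7 : t ^+ 2 * (E * nr ip x) = t * (t * E * nr ip x) by ring.
  have h8 : (1 - t ^+ 2 * E) * nr ip x = nr ip x - t * (t * E * nr ip x) by ring.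
  have h6 : t * (t * E * nr ip x) <= t * nr ip (T x).
    by rewrite ler_wpM2l ?(ltW t0) // -h4.
  rewrite /q h8. rewrite h7 in h5. lra.
set s := Num.sqrt q.
have s0 : 0 <= s := sqrtr_ge0 q.
have s1 : s < 1 by rewrite /s -sqrtr1 ltr_sqrt // ltr01.
have nrmK : forall x, Td (T x) = x -> nrm ip (K x) <= s * nrm ip x.
  move=> x hx. rewrite /nrm /s -sqrtrM // ler_sqrt ?mulr_ge0 ?nr_ge0 //.
  exact: nrK.
set r := fun k => iter k K w0.
have Pr : forall k, Td (T (r k)) = r k.
  elim=> [|k IH]; first by rewrite /r /= /w0 hTTdT.
  by rewrite /r iterS PK.
set W := nrm ip w0.
have W0 : 0 <= W := nrm_ge0 ip w0.
have nrmr : forall k, nrm ip (r k) <= s ^+ k * W.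
  elim=> [|k IH]; first by rewrite expr0 mul1r.
  rewrite /r iterS -/(r k). apply: le_trans (nrmK _ (Pr k)) _.
  rewrite exprS -mulrA ler_wpM2l //.
set v := fun k => \sum_(j < k) r j.
have vS : forall k, v k.+1 = v k + r k by move=> k; rewrite /v big_ord_recr.
have v0 : v 0%N = 0 by rewrite /v big_ord0.
have AV : forall k, t%:C *: Ts (T (v k)) = w0 - r k.
  elim=> [|k IH].
    by rewrite v0 (op0 hT) (op0 hTsb) scaler0 /r /= subrr.
  rewrite vS (opD hT) (opD hTsb) scalerDr IH /r iterS -/(r k) /K.
  by rewrite [in RHS]opprB [in RHS]addrA [in LHS]addrAC.
have hc0 : forall k d, (1 - s) * nrm ip (v (k + d)%N - v k) <= W * (s ^+ k - s ^+ (k + d)).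
  move=> k; elim=> [|d IH]; first by rewrite addn0 subrr (nrm0 hH) !mulr0 subrr mulr0.
  rewrite addnS vS [_ + r _ - _]addrAC.
  have ht := nrm_tri hH (v (k + d)%N - v k) (r (k + d)%N).
  have hr := nrmr (k + d)%N.
  have hs : 0 <= 1 - s by lra.
  have := ler_wpM2l hs ht. rewrite mulrDr => h7.
  have := ler_wpM2l hs hr => h8.
  rewrite exprS. 
  have sk : 0 <= s ^+ (k + d) := exprn_ge0 _ s0.
  nra.
have hc1 : forall k m, (k <= m)%N -> (1 - s) * nrm ip (v m - v k) <= W * s ^+ k.
  move=> k m hkm. rewrite -(subnKC hkm). apply: le_trans (hc0 _ _) _.
  rewrite ler_wpM2l // lerBlDr lerDl. exact: exprn_ge0.
have hcv : hcauchy ip v.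
  apply: (cauchy_C hH) => e he.
  have hs : 0 < 1 - s by lra.
  have [N hN] := geo s0 s1 W0 (mulr_gt0 hs he).
  exists N => k m hk hm.
  rewrite -(ltr_pM2l hs).
  have hmon : forall j, (N <= j)%N -> W * s ^+ j <= W * s ^+ N.
    move=> j hj; rewrite ler_wpM2l //. apply: ler_wiXn2l => //; exact: ltW.
  case: (leqP k m) => hkm.
    rewrite -(nrmN hH) opprB.
    apply: le_lt_trans (hc1 _ _ hkm) _. exact: le_lt_trans (hmon _ hk) hN.
  apply: le_lt_trans (hc1 _ _ (ltnW hkm)) _. exact: le_lt_trans (hmon _ hm) hN.
have [vl hvl] := h_complete hH hcv.
exists (t%:C *: T vl).
rewrite (opZ hTsb) -/w0.
apply/eqP; rewrite -subr_eq0; apply/eqP; apply: (nrm_eq0 hH).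
set d := t%:C *: Ts (T vl) - w0.
have dp := nrm_ge0 ip d.
apply/eqP; rewrite eq_le dp andbT; rewrite leNgt; apply/negP => hd.
set e := nrm ip d.
have tL : 0 < 2 * t * L by apply: mulr_gt0; [apply: mulr_gt0 => //; lra | lra].
have [N1 hN1] := conv_R hH hvl (divr_gt0 hd tL).
have [N2 hN2] := geo s0 s1 W0 (divr_gt0 hd (ltr0Sn _ 1%N) : 0 < e / 2%:R).
set k := maxn N1 N2.
have hk1 := hN1 k (leq_maxl _ _).
have hk2 : nrm ip (r k) < e / 2%:R.
  apply: le_lt_trans (nrmr k) _. rewrite mulrC. apply: le_lt_trans _ hN2.
  rewrite ler_wpM2l //. apply: ler_wiXn2l => //; [exact: ltW|].
  exact: leq_maxr.
have ed : d = t%:C *: Ts (T (vl - v k)) - r k.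
  rewrite (opB hT) (opB hTsb) scalerBr AV /d.
  by rewrite [in RHS]opprB [in RHS]addrA [in RHS]addrAC addrK.
have : e <= `|t| * (L * nrm ip (vl - v k)) + nrm ip (r k).
  rewrite /e {1}ed. apply: le_trans (nrm_tri hH _ _) _.
  rewrite (nrmN hH) (nrmZ hH) lerD2r ler_wpM2l //.
rewrite ger0_norm ?(ltW t0) //.
rewrite -(nrmN hH) opprB => h9.
have h10 : t * (L * nrm ip (v k - vl)) < t * (L * (e / (2 * t * L))).
  rewrite ltr_pM2l // ltr_pM2l //; lra.
have h11 : t * (L * (e / (2 * t * L))) = e / 2%:R.
  field. by apply/andP; split; rewrite gt_eqF //; lra.
lra.
Qed.
End Key.

Theorem mainTheorem15 (R : realType) (H : lmodType R[i]) (ip : H -> H -> R[i])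
  (hH : is_hilbert ip) (T Ts Td : H -> H) (n : nat)
  (hn : (1 <= n)%N)
  (hT : bounded_op ip T) (hcl : closed_range ip T)
  (hTs : is_adjoint ip T Ts) (hTd : is_MP_inverse ip T Td) :
  (commute_op (Td \o T) (op_add (op_pow T n) Td) \/
   commute_op (Td \o T) (op_add (op_pow T n) Ts)) ->
  n_hypo_EP ip n T Ts.
Proof.
move=> hc; split; first exact: hcl.
have hTsb : bounded_op ip Ts by case: hTs.
have hTdb := hTd; case: hTdb => hTdb hTTdT hTdTTd _ _.
have PD : forall x y, Td (T (x + y)) = Td (T x) + Td (T y).
  by move=> x y; rewrite (opD hT) (opD hTdb).
have PP : forall x, Td (T (Td (T x))) = Td (T x) by move=> x; rewrite hTTdT.
have TnP : forall u, op_pow T n (Td (T u)) = op_pow T n u.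
  move=> u; by rewrite /op_pow -(prednK hn) !iterSr hTTdT.
have PTn : forall u, Td (T (op_pow T n u)) = op_pow T n u.
  move=> u. case: hc => hc; have := hc (Td (T u)); rewrite /= /op_add PD PP TnP.
    rewrite hTdTTd. by move/addIr.
  rewrite (@PTs _ _ _ hH T Ts Td hTs hTd (Td (T u))). by move/addIr.
move=> y [x <-].
have [z hz] := key hH hT hTs hTd (op_pow T n x).
exists z. by rewrite hz PTn.
Qed.
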